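(* Consider $\dot y=A(t)y+B(t)(u+\Delta(y,t))$, $y\in\mathbb{R}^{\bar n}$, $u\in\mathbb{R}^{\bar m}$, with continuous, bounded, $T$-periodic $A(t),B(t)$ (minimal period $T>0$) and unknown bounded $\Delta$. Let $K:\mathbb{R}_+\to\mathbb{R}^{\bar m\times\bar n}$ be continuous and $T$-periodic such that the origin of $\dot\chi=A^{cl}(t)\chi$, $A^{cl}=A+BK$, is exponentially stable, and let $\Psi_{A^{cl}}(t,t_0)$ be its state-transition matrix and $\mathcal M_{A^{cl}}=\Psi_{A^{cl}}(T,0)$ its monodromy matrix. Let $X_0\in\mathbb{R}^{\bar n\times(\bar n-\bar m)}$ be of full rank and let the $\mathcal{C}^1$ matrix function $S:\mathbb{R}_+\to\mathbb{R}^{\bar m\times\bar n}$ satisfy $S(t)\Psi_{A^{cl}}(t,0)X_0p=0$ for all $p\in\mathbb{R}^{\bar n-\bar m}$ and all $t\ge0$. If $\operatorname{rank}[S(t)B(t)]=\bar m$ for all $t\ge0$, then forward invariance of $S(t)y(t)\equiv0$ for $t\ge t_0$ corresponds to the system experiencing the equivalent control $u_{eq}(t)=K(t)y(t)-\Delta(y(t),t)$ for all $t\ge t_0$. Moreover, if $S$ is $T$-periodic, then the columns of $X_0$ form a basis of an invariant subspace of $\mathcal M_{A^{cl}}$ of codimension $\bar m$.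
   Context: Equivalent control: the control obtained from requiring $\frac{d}{dt}(S(t)y(t))\equiv0$ along motions satisfying $S(t)y(t)=0$. *)

(* Defs.v *)
From HB Require Import structures.
From mathcomp Require Import all_boot all_order all_algebra.
From mathcomp Require Import all_classical all_reals all_analysis.
Set Implicit Arguments. Unset Strict Implicit. Unset Printing Implicit Defensive.
Import Order.TTheory GRing.Theory Num.Theory.
Import numFieldNormedType.Exports.
Local Open Scope ring_scope.

Definition state_transition (R : realType) (n : nat)
    (Acl : R -> 'M[R]_n) (Psi : R -> R -> 'M[R]_n) : Prop :=
  [/\ forall s, Psi s s = 1%:M,
      forall t s, is_derive t (1 : R) (fun tau => Psi tau s) (Acl t *m Psi t s)
    & forall t s r, Psi t s *m Psi s r = Psi t r].

Definition exp_stable (R : realType) (n : nat) (Acl : R -> 'M[R]_n) : Prop :=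
  exists c lam : R, 0 < c /\ 0 < lam /\
    forall (t0 : R) (chi : R -> 'cV[R]_n), 0 <= t0 ->
      (forall t, t0 <= t -> is_derive t (1 : R) chi (Acl t *m chi t)) ->
      forall t, t0 <= t -> `|chi t| <= c * expR (- lam * (t - t0)) * `|chi t0|.

Definition plant_motion (R : realType) (n m : nat)
    (A : R -> 'M[R]_n) (B : R -> 'M[R]_(n, m))
    (Delta : 'cV[R]_n -> R -> 'cV[R]_m)
    (u : R -> 'cV[R]_m) (y : R -> 'cV[R]_n) (t0 : R) : Prop :=
  forall t, t0 <= t ->
    is_derive t (1 : R) y (A t *m y t + B t *m (u t + Delta (y t) t)).

Definition C1_on_nonneg (R : realType) (m n : nat) (S : R -> 'M[R]_(m, n)) : Prop :=
  (forall t, 0 <= t -> derivable S t (1 : R)) /\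
  (forall t, 0 <= t -> {for t, continuous (fun tau => 'D_(1 : R) S tau)}).

(* Main.v *)
Require Import Defs.
From HB Require Import structures.
From mathcomp Require Import all_boot all_order all_algebra.
From mathcomp Require Import all_classical all_reals all_analysis.
Import Order.TTheory GRing.Theory Num.Theory.
Import numFieldNormedType.Exports.
Local Open Scope ring_scope.

Lemma ker_sub (F : fieldType) n m k (S : 'M[F]_(m,n)) (M : 'M[F]_(n, n-m))
  (Y : 'M[F]_(n,k)) :
  \rank S = m -> \rank M = (n-m)%N -> S *m M = 0 -> S *m Y = 0 ->
  (Y^T <= M^T)%MS.
Proof.
move=> rS rM SM SY.
have sub : (M^T <= kermx S^T)%MS by apply/sub_kermxP; rewrite -trmx_mul SM trmx0.
have yk : (Y^T <= kermx S^T)%MS by apply/sub_kermxP; rewrite -trmx_mul SY trmx0.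
apply: submx_trans yk _.
rewrite -(mxrank_leqif_sup sub).2 mxrank_ker !mxrank_tr rS rM.
by [].
Qed.

Lemma ker_span (F : fieldType) n m (S : 'M[F]_(m,n)) (M : 'M[F]_(n, n-m))
  (y : 'cV[F]_n) :
  \rank S = m -> \rank M = (n-m)%N -> S *m M = 0 -> S *m y = 0 ->
  exists p : 'cV[F]_(n-m), y = M *m p.
Proof.
move=> rS rM SM Sy; have /submxP [D hD] := ker_sub _ _ _ _ _ _ _ rS rM SM Sy.
by exists D^T; rewrite -[y]trmxK hD trmx_mul trmxK.
Qed.

Lemma deriv_vanish (R : realType) (W : normedModType R) (f : R -> W) t d :
  is_derive t (1:R) f d -> (forall s, t <= s -> f s = 0) -> d = 0.
Proof.
move=> [df <-] f0.
rewrite /derive cvg_at_rightE //.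
apply: cvg_lim => //.
apply: cvg_near_cst; near=> h.
rewrite /= !f0 ?subr0 ?scaler0 //.
rewrite -lerBlDr subrr scaler1; apply/ltW.
by near: h; exact: nbhs_right_gt.
Unshelve. all: by end_near. Qed.

Lemma is_derive_mulmx (R : realType) a b c (F : R -> 'M[R]_(a,b))
  (G : R -> 'M[R]_(b,c)) t dF dG :
  is_derive t (1:R) F dF -> is_derive t (1:R) G dG ->
  is_derive t (1:R) (fun x => F x *m G x) (dF *m G t + F t *m dG).
Proof.
move=> [dFd <-] [dGd <-].
have dFe := (derivable_mxP F t 1).1 dFd.
have dGe := (derivable_mxP G t 1).1 dGd.
have dP : forall i j, is_derive t (1:R) (fun x => (F x *m G x) i j)
   (\sum_(k < b) ('D_1 (fun x => F x i k) t * G t k j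
                 + F t i k * 'D_1 (fun x => G x k j) t)).
  move=> i j.
  have -> : (fun x => (F x *m G x) i j) =
            \sum_(k < b) ((fun x => F x i k) * (fun x => G x k j)).
    by apply/funext => x; rewrite mxE fct_sumE.
  apply: is_derive_sum => k.
  apply: is_derive_eq.
    apply: is_deriveM; exact: derivableP.
  by rewrite addrC; congr (_ + _); exact: mulrC.
apply: DeriveDef.
  by apply/derivable_mxP => i j; exact: (@ex_derive _ _ _ _ _ _ _ (dP i j)).
rewrite derive_mx; last by apply/derivable_mxP => i j; exact: (@ex_derive _ _ _ _ _ _ _ (dP i j)).
apply/matrixP => i j; rewrite !mxE (@derive_val _ _ _ _ _ _ _ (dP i j)).
rewrite big_split /=; congr (_ + _); apply: eq_bigr => k _.
  by rewrite derive_mx // mxE.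
by rewrite [in RHS]derive_mx // mxE.
Qed.

Arguments is_derive_mulmx {R a b c F G t dF dG}.
Arguments deriv_vanish {R W f t d}.

Theorem lemma3 (R : realType) (n m : nat) (T : R)
    (A : R -> 'M[R]_n) (B : R -> 'M[R]_(n, m))
    (Delta : 'cV[R]_n -> R -> 'cV[R]_m)
    (K : R -> 'M[R]_(m, n)) (Psi : R -> R -> 'M[R]_n)
    (X0 : 'M[R]_(n, n - m)) (S : R -> 'M[R]_(m, n)) :
  0 < T ->
  continuous A -> continuous B -> bounded_fun A -> bounded_fun B ->
  periodic A T -> periodic B T ->
  (forall T' : R, 0 < T' < T -> ~ (periodic A T' /\ periodic B T')) ->
  (exists M : R, forall y t, `|Delta y t| <= M) ->
  continuous K -> periodic K T ->
  exp_stable (fun t => A t + B t *m K t) ->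
  state_transition (fun t => A t + B t *m K t) Psi ->
  \rank X0 = (n - m)%N ->
  C1_on_nonneg S ->
  (forall (t : R) (p : 'cV[R]_(n - m)), 0 <= t -> S t *m (Psi t 0 *m X0 *m p) = 0) ->
  (forall t : R, 0 <= t -> \rank (S t *m B t) = m) ->
  (forall (t0 : R) (y : R -> 'cV[R]_n) (u : R -> 'cV[R]_m),
      0 <= t0 -> plant_motion A B Delta u y t0 -> S t0 *m y t0 = 0 ->
      ((forall t, t0 <= t -> S t *m y t = 0) <->
       (forall t, t0 <= t -> u t = K t *m y t - Delta (y t) t)))
  /\
  ((forall t : R, 0 <= t -> S (t + T) = S t) ->
      stablemx X0^T (Psi T 0)^T /\ (\rank X0 + m)%N = n).
Proof.
move=> T0 _ _ _ _ _ _ _ _ _ _ hstab [Psi0 dPsi cPsi] rX0 [dS _] hSPsi hSB.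
have mn : (m <= n)%N.
  by rewrite -{1}(hSB 0 (lexx _)); apply: leq_trans (mxrankM_maxl _ _) (rank_leq_col _).
have rS : forall t, 0 <= t -> \rank (S t) = m.
  move=> t ht; apply/eqP; rewrite eqn_leq rank_leq_row /=.
  by rewrite -{1}(hSB t ht) mxrankM_maxl.
have rPX : forall t, \rank (Psi t 0 *m X0) = (n - m)%N.
  move=> t; transitivity (\rank X0) => //; apply/eqP; rewrite eqn_leq mxrankM_maxr /=.
  have {1}-> : X0 = Psi 0 t *m (Psi t 0 *m X0) by rewrite mulmxA cPsi Psi0 mul1mx.
  exact: mxrankM_maxr.
have SPX : forall t, 0 <= t -> S t *m (Psi t 0 *m X0) = 0.
  move=> t ht; apply/matrixP => i j.
  have := hSPsi t (delta_mx j 0) ht; rewrite mulmxA -colE => /matrixP /(_ i 0).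
  by rewrite !mxE.
have span : forall t v, 0 <= t -> S t *m v = 0 ->
    exists p : 'cV[R]_(n - m), v = Psi t 0 *m X0 *m p.
  move=> t v ht Sv.
  exact: (ker_span _ _ _ _ _ _ (rS t ht) (rPX t) (SPX t ht) Sv).
split.
  move=> t0 y u ht0 hy hSy0; split.
  - move=> hS t ht.
    have ht' : 0 <= t := le_trans ht0 ht.
    have [p hp] := span t (y t) ht' (hS t ht).
    have d1 := is_derive_mulmx (derivableP (dS t ht')) (hy t ht).
    have e1 := deriv_vanish d1 (fun s hs => hS s (le_trans ht hs)).
    have dP := is_derive_mulmx (dPsi t 0) (is_derive_cst (X0 *m p) t 1).
    have d2 := is_derive_mulmx (derivableP (dS t ht')) dP.
    have e2 := deriv_vanish d2 (fun s hs =>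
      etrans (congr1 (mulmx (S s)) (mulmxA (Psi s 0) X0 p)) (hSPsi s p (le_trans ht' hs))).
    have hp' : Psi t 0 *m (X0 *m p) = y t by rewrite hp mulmxA.
    rewrite /= mulmx0 addr0 -[(_ + _) *m Psi t 0 *m _]mulmxA hp' in e2.
    set D := 'D_1 S t in e1 e2.
    set W := u t + Delta (y t) t in e1 *.
    have key : S t *m B t *m (W - K t *m y t) =
      (D *m y t + S t *m (A t *m y t + B t *m W)) -
      (D *m y t + S t *m ((A t + B t *m K t) *m y t)).
      clearbody W D.
      rewrite mulmxBr !mulmxDr !mulmxDl !mulmxDr !mulmxA.
      by rewrite opprD addrACA subrr add0r opprD addrACA subrr add0r.
    have uSB : S t *m B t \in unitmx by rewrite -row_free_unit /row_free hSB.
    have w0 : W - K t *m y t = 0.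
      by rewrite -(mulKmx uSB (W - K t *m y t)) key e1 e2 subrr mulmx0.
    by apply/eqP; rewrite -subr_eq0 opprB addrA w0.
  - move=> hu t ht.
    have [c [lam [c0 [l0 hexp]]]] := hstab.
    have dq : forall x, t0 <= x -> is_derive x (1:R) (fun x => y x - Psi x t0 *m y t0)
        ((A x + B x *m K x) *m (y x - Psi x t0 *m y t0)).
      move=> x hx.
      have d1 := hy x hx; rewrite (hu x hx) subrK in d1.
      have d2 := is_derive_mulmx (dPsi x t0) (is_derive_cst (y t0) x 1).
      have := is_deriveB d1 d2.
      move=> h; apply: is_derive_eq h _ => /=; rewrite mulmx0 addr0.
      by rewrite mulmxBr [(_ + _) *m y x]mulmxDl !mulmxA.
    have := hexp t0 _ ht0 dq t ht.
    rewrite Psi0 mul1mx subrr normr0 mulr0 normr_le0 subr_eq0 => /eqP yt.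
    have [p hp] := span t0 (y t0) ht0 hSy0.
    have -> : y t = Psi t 0 *m X0 *m p by rewrite yt hp !mulmxA cPsi.
    exact: hSPsi (le_trans ht0 ht).
move=> hper; split; last by rewrite rX0 subnK.
rewrite -trmx_mul.
have := ker_sub _ _ _ _ (S 0) X0 (Psi T 0 *m X0) (rS 0 (lexx _)) rX0.
apply.
  by have := SPX 0 (lexx _); rewrite Psi0 mul1mx.
by rewrite -(hper 0 (lexx _)) add0r SPX // ltW.
Qed.
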